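(* For every $d\in\mathbb{N}$ there exist non-empty families $\mathcal{F}_1,\dots,\mathcal{F}_{3d-1}$ of axis-parallel boxes in $\mathbb{R}^d$ such that (i) every colorful $(3d-1)$-tuple is $2$-pierceable, and (ii) for each $i\in[3d-1]$, $\mathcal{F}_i$ is not $2$-pierceable.
   Context: An axis-parallel box in $\mathbb{R}^d$ is a set $[\alpha_1,\beta_1]\times\dots\times[\alpha_d,\beta_d]$ with real $\alpha_j\le\beta_j$. A family is $2$-pierceable if some set of at most $2$ points meets every member. A colorful $(3d-1)$-tuple from $\mathcal{F}_1,\dots,\mathcal{F}_{3d-1}$ is a tuple containing exactly one member from each family (with distinct family indices). *)

(* Defs.v *)
From Stdlib Require Import Reals.
From mathcomp Require Import all_boot.
Set Implicit Arguments. Unset Strict Implicit. Unset Printing Implicit Defensive.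
Open Scope R_scope.

Definition point (d : nat) := 'I_d -> R.

Record box (d : nat) := Box {
  lo : 'I_d -> R;
  hi : 'I_d -> R;
  lo_le_hi : forall j, lo j <= hi j }.

Definition in_box (d : nat) (x : point d) (B : box d) : Prop :=
  forall j : 'I_d, lo B j <= x j <= hi B j.

Definition boxfam (d : nat) := box d -> Prop.

(* Some set of at most 2 points meets every member (two possibly equal points). *)
Definition pierceable2 (d : nat) (F : boxfam d) : Prop :=
  exists p q : point d, forall B, F B -> in_box p B \/ in_box q B.

Definition nonempty_family (d : nat) (F : boxfam d) : Prop := exists B, F B.

Definition tuple_family (d n : nat) (t : 'I_n -> box d) : boxfam d :=
  fun B => exists i, B = t i.

Arguments boxfam d : clear implicits.
Arguments point d : clear implicits.

(* Main.v *)
Require Import Defs.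
From Stdlib Require Import Reals Lra.
From Stdlib Require Import IndefiniteDescription.
From mathcomp Require Import all_boot zify.
Set Implicit Arguments. Unset Strict Implicit. Unset Printing Implicit Defensive.
Local Open Scope nat_scope.

Definition nbox d (f : 'I_d -> nat * nat) : box d.
Proof.
refine (@Box d (fun k => INR (f k).1) (fun k => INR (maxn (f k).1 (f k).2)) _).
move=> j; apply: le_INR; apply/leP; exact: leq_maxl.
Defined.

Lemma in_nbox d (f : 'I_d -> nat * nat) (g : 'I_d -> nat) :
  (forall k, (f k).1 <= g k <= (f k).2)%N -> in_box (fun k => INR (g k)) (nbox f).
Proof.
move=> H k /=; have /andP[h1 h2] := H k; split; apply: le_INR; apply/leP => //.
exact: leq_trans h2 (leq_maxr _ _).
Qed.

Lemma nbox_disj d (f1 f2 : 'I_d -> nat * nat) (x : point d) k :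
  (maxn (f1 k).1 (f1 k).2 < (f2 k).1)%N -> in_box x (nbox f1) -> in_box x (nbox f2) -> False.
Proof.
move=> H h1 h2; have [_ a] := h1 k; have [b _] := h2 k; simpl in *.
have : Rlt (INR (maxn (f1 k).1 (f1 k).2)) (INR (f2 k).1) by apply: lt_INR; apply/ltP.
move=> hh; lra.
Qed.

Lemma alt_lem (m : nat) (P Q : nat -> Prop) :
  (forall j, (j < m)%N -> P j \/ Q j) ->
  (forall j, (j.+1 < m)%N -> ~ (P j /\ P j.+1)) ->
  (forall j, (j.+1 < m)%N -> ~ (Q j /\ Q j.+1)) ->
  P 0%N -> forall j, (j < m)%N -> (if odd j then Q j else P j).
Proof.
move=> H hP hQ P0; elim => [|j IH] Hj //=.
have IHj := IH (ltnW Hj).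
case: (odd j) IHj => /= hj.
- case: (H _ Hj) => // q; exfalso; exact: (hQ j Hj (conj hj q)).
- case: (H _ Hj) => // p; exfalso; exact: (hP j Hj (conj hj p)).
Qed.

Lemma odd_cycle (m : nat) (P Q : nat -> Prop) : odd m ->
  (forall j, (j < m)%N -> P j \/ Q j) ->
  (forall j, (j.+1 < m)%N -> ~ (P j /\ P j.+1)) ->
  (forall j, (j.+1 < m)%N -> ~ (Q j /\ Q j.+1)) ->
  ~ (P m.-1 /\ P 0%N) -> ~ (Q m.-1 /\ Q 0%N) -> False.
Proof.
move=> om H hP hQ w1 w2.
have m0 : (0 < m)%N by rewrite lt0n; apply/eqP => e; move: om; rewrite e.
have em : odd m.-1 = false by move: om; rewrite -(prednK m0) /= => /negbTE.
have lm : (m.-1 < m)%N by rewrite ltn_predL.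
case: (H 0%N m0) => h0.
- have := alt_lem H hP hQ h0 lm; rewrite em => h; exact: w1.
- have := alt_lem (P:=Q) (Q:=P) (fun j hj => proj1 (or_comm (P j) (Q j)) (H j hj)) hQ hP h0 lm.
  rewrite em => h; exact: w2.
Qed.

Lemma pigeon n (g : nat -> nat) : exists s, (s <= n)%N /\ forall i, (i < n)%N -> g i != s.
Proof.
set S := [seq g i | i <- iota 0 n].
case h: (has (fun s => s \notin S) (iota 0 n.+1)).
- move/hasP: h => [s]; rewrite mem_iota => /andP[_ hs] hn.
  exists s; split; first by [].
  move=> i hi; apply/eqP => e; move: hn; rewrite -e; apply/negP/negPn.
  apply: map_f; rewrite mem_iota; exact: hi.
- exfalso.
  have sub : {subset iota 0 n.+1 <= S}.
    move=> x hx; move/hasPn: h => /(_ x hx); by rewrite negbK.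
  move: (uniq_leq_size (iota_uniq 0 n.+1) sub).
  by rewrite size_iota size_map size_iota ltnn.
Qed.


Definition mm L := if odd L then (3*L).+2 else (3*L).+1.
Definition col L s j := odd (if s < j then j - s - 1 else j + mm L - s - 1).

Definition Vint L j k : nat * nat :=
  if k < L then
    (if j == 3*k then (2,5) else if j == (3*k).+1 then (0,1)
     else if j == (3*k).+2 then (3,4) else if j == (3*k).+3 then (0,2) else (0,40))
  else if odd L then
    (if j == 3*L then (4,10) else if j == (3*L).+1 then (0,2)
     else if j == 0 then (4,10) else (0,40))
  else (if j == 3*L then (0,10) else if j == 0 then (30,40) else (0,40)).

Definition Tint L tf u k : nat * nat :=
  if k < L then (0,40) else if odd L then
    (if u == 0 then (3,4) else if u == 1 then (5,6) else (7,11))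
  else if tf == 0 then (if u == 0 then (0,2) else if u == 1 then (8,10) else (31,39))
  else (if u == 0 then (1,9) else if u == 1 then (30,32) else (38,40)).

Definition Aval u := if u == 0 then 1 else if u == 1 then 9 else 5.
Definition Evl u := if u == 0 then 35 else if u == 1 then 31 else 39.
Definition Tval u := if u == 0 then 4 else if u == 1 then 5 else 8.
Definition Eside L s X := if 3*L != s then col L s (3*L) != X else col L s 0 == X.

Definition ptv L s t0 t1 (X : bool) k :=
  if k < L then
    (if ((3*k).+1 != s) && (col L s (3*k).+1 == X) then 1
     else if ((3*k).+3 != s) && (col L s (3*k).+3 == X) then 2 else 3)
  else if odd L then
    (if ((3*L).+1 != s) && (col L s (3*L).+1 == X) then 1 else Tval t0)
  else if Eside L s X then Evl t1 else Aval t0.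

Lemma col_next L s j : j != s -> j.+1 != s -> j.+1 < mm L -> s < mm L ->
  col L s j.+1 = ~~ col L s j.
Proof.
rewrite /col => h1 h2 h3 h4.
case: (ltnP s j) => hsj.
- have -> : s < j.+1 by lia.
  have -> : j.+1 - s - 1 = (j - s - 1).+1 by lia.
  by [].
- have -> : s < j.+1 = false by lia.
  have -> : j.+1 + mm L - s - 1 = (j + mm L - s - 1).+1 by lia.
  by [].
Qed.

Lemma col_wrap L s : 0 != s -> (mm L).-1 != s -> s < mm L ->
  col L s 0 = ~~ col L s (mm L).-1.
Proof.
rewrite /col => h1 h2 h3.
have -> : s < 0 = false by [].
have -> : s < (mm L).-1 by lia.
have -> : 0 + mm L - s - 1 = ((mm L).-1 - s - 1).+1 by lia.
by [].
Qed.

Lemma mm_gt L : 3 * L < mm L.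
Proof. rewrite /mm; case: ifP => _; lia. Qed.

Lemma cnext1 L s j : j != s -> j.+1 < mm L -> s < mm L ->
  ((j.+1 != s) && (col L s j.+1 == col L s j)) = false.
Proof.
move=> h1 h2 h3; case E: (j.+1 != s) => //=.
rewrite col_next //; by case: (col L s j).
Qed.

Lemma cnext2 L s j : j.+1 != s -> j.+1 < mm L -> s < mm L ->
  ((j != s) && (col L s j == col L s j.+1)) = false.
Proof.
move=> h1 h2 h3; case E: (j != s) => //=.
rewrite col_next //; by case: (col L s j).
Qed.

Lemma cwrap1 L s : 0 != s -> s < mm L -> 0 < mm L ->
  (((mm L).-1 != s) && (col L s (mm L).-1 == col L s 0)) = false.
Proof.
move=> h1 h2 h3; case E: ((mm L).-1 != s) => //=.
rewrite col_wrap //; by case: (col L s (mm L).-1).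
Qed.

Lemma cwrap2 L s : (mm L).-1 != s -> s < mm L ->
  ((0 != s) && (col L s 0 == col L s (mm L).-1)) = false.
Proof.
move=> h1 h2; case E: (0 != s) => //=.
rewrite col_wrap //; by case: (col L s (mm L).-1).
Qed.


Lemma coreA L s t0 t1 j k : s < mm L -> j < mm L -> j != s -> k <= L ->
  (Vint L j k).1 <= ptv L s t0 t1 (col L s j) k <= (Vint L j k).2.
Proof.
move=> hs hj hjs hkL.
have hm := mm_gt L.
rewrite /Vint /ptv.
case hk: (k < L).
- have b3 : (3*k).+3 < mm L by lia.
  case: eqP => [ej|nj0].
  + subst j.
    rewrite cnext1 //; last lia.
    by case: ifP.
  case: eqP => [ej|nj1].
  + subst j; by rewrite hjs eqxx.
  case: eqP => [ej|nj2].
  + subst j.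
    rewrite (@cnext2 L s (3*k).+1) //.
    rewrite (@cnext1 L s (3*k).+2) //.
  case: eqP => [ej|nj3].
  + subst j. rewrite hjs eqxx /=. by case: ifP.
  + by case: ifP => _ //; case: ifP.
- have ekL : k = L by lia.
  subst k.
  case oL: (odd L).
  + have em : mm L = (3*L).+2 by rewrite /mm oL.
    case: eqP => [ej|nj0].
    * subst j.
      rewrite cnext1 //; last lia.
      rewrite /Tval; by case: ifP => _ //; case: ifP.
    case: eqP => [ej|nj1].
    * subst j; by rewrite hjs eqxx.
    case: eqP => [ej|nj2].
    * subst j.
      have := @cwrap1 L s hjs hs ltac:(lia).
      rewrite em /= => ->.
      rewrite /Tval; by case: ifP => _ //; case: ifP.
    * rewrite /Tval; by case: ifP => _ //; case: ifP => _ //; case: ifP.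
  + have em : mm L = (3*L).+1 by rewrite /mm oL.
    case: eqP => [ej|nj0].
    * subst j.
      rewrite /Eside hjs eqxx /= /Aval.
      by case: ifP => _ //; case: ifP.
    case: eqP => [ej|nj1].
    * subst j.
      have -> : Eside L s (col L s 0) = true.
        rewrite /Eside; case E: (3*L != s) => /=; last exact: eqxx.
        have E' : (mm L).-1 != s by rewrite em.
        have hw := @col_wrap L s hjs E' hs.
        rewrite em /= in hw; rewrite hw; by case: (col L s (3*L)).
      rewrite /Evl; by repeat case: ifP => //.
    * rewrite /Evl /Aval; by repeat case: ifP => //.
Qed.


Lemma ptv_le3 L s t0 t1 X k : k < L -> ptv L s t0 t1 X k <= 3.
Proof. move=> hk; rewrite /ptv hk; by repeat case: ifP => //. Qed.

Lemma tri_ev L s t0 t1 k : odd L -> t0 < 3 -> k <= L ->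
  (Tint L 0 t0 k).1 <= ptv L s t0 t1 (~~ col L s (3*L).+1) k <= (Tint L 0 t0 k).2.
Proof.
move=> oL ht hk; rewrite /Tint.
case hkL: (k < L).
- by have := ptv_le3 s t0 t1 (~~ col L s (3*L).+1) hkL; rewrite /=; lia.
- have ekL : k = L by lia.
  subst k; rewrite /ptv hkL oL.
  have -> : ((3*L).+1 != s) && (col L s (3*L).+1 == ~~ col L s (3*L).+1) = false.
    by case: (col L s (3*L).+1); rewrite andbF.
  rewrite /Tval; case: t0 ht => [|[|[|t0]]] //.
Qed.

Definition XE L s := if 3*L != s then ~~ col L s (3*L) else col L s 0.

Lemma Eside_XE L s : Eside L s (XE L s) = true.
Proof.
rewrite /Eside /XE; case: (3*L != s) => /=; last exact: eqxx.
by case: (col L s (3*L)).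
Qed.

Lemma Eside_nXE L s : Eside L s (~~ XE L s) = false.
Proof.
rewrite /Eside /XE; case: (3*L != s) => /=.
  by case: (col L s (3*L)).
by case: (col L s 0).
Qed.

Lemma tri_odd0 L s t0 t1 k : ~~ odd L -> t0 < 3 -> k <= L ->
  (Tint L 0 t0 k).1 <= ptv L s t0 t1 (if t0 == 2 then XE L s else ~~ XE L s) k
   <= (Tint L 0 t0 k).2.
Proof.
move=> oL ht hk; rewrite /Tint.
case hkL: (k < L).
- by have := ptv_le3 s t0 t1 (if t0 == 2 then XE L s else ~~ XE L s) hkL; rewrite /=; lia.
- have ekL : k = L by lia.
  subst k; rewrite /ptv hkL (negbTE oL) /=.
  case: t0 ht => [|[|[|t0]]] // _ /=.
  + by rewrite Eside_nXE.
  + by rewrite Eside_nXE.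
  + rewrite Eside_XE /Evl; by repeat case: ifP => //.
Qed.

Lemma tri_odd1 L s t0 t1 k : ~~ odd L -> t1 < 3 -> k <= L ->
  (Tint L 1 t1 k).1 <= ptv L s t0 t1 (if t1 == 0 then ~~ XE L s else XE L s) k
   <= (Tint L 1 t1 k).2.
Proof.
move=> oL ht hk; rewrite /Tint.
case hkL: (k < L).
- by have := ptv_le3 s t0 t1 (if t1 == 0 then ~~ XE L s else XE L s) hkL; rewrite /=; lia.
- have ekL : k = L by lia.
  subst k; rewrite /ptv hkL (negbTE oL) /=.
  case: t1 ht => [|[|[|t1]]] // _ /=.
  + rewrite Eside_nXE /Aval; by repeat case: ifP => //.
  + by rewrite Eside_XE.
  + by rewrite Eside_XE.
Qed.

Definition disjI (a b : nat * nat) := maxn a.1 a.2 < b.1 \/ maxn b.1 b.2 < a.1.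

Lemma Vdisj L j : 0 < L -> j.+1 < mm L -> exists k, k <= L /\ disjI (Vint L j k) (Vint L j.+1 k).
Proof.
move=> L0 hj.
case hjL: (j < 3 * L).
- exists (j %/ 3); split; first lia.
  have hk : j %/ 3 < L by lia.
  rewrite /Vint hk.
  have := divn_eq j 3; set k := j %/ 3; set r := j %% 3 => ej.
  have hr : r < 3 by rewrite /r ltn_mod.
  rewrite ej; case: r hr {ej} => [|[|[|r]]] // _; rewrite /disjI;
  repeat (case: eqP => ? /=); lia.
- have ej : j = 3 * L.
    move: hj; rewrite /mm; case: ifP => _; lia.
  have oL : odd L.
    move: hj; rewrite /mm ej; case: ifP => //; lia.
  exists L; split => //.
  rewrite /Vint ltnn oL ej eqxx.
  have -> : (3*L).+1 == 3*L = false by lia.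
  rewrite eqxx /disjI /=; by right.
Qed.

Lemma Vwrap L : 0 < L -> exists k, k <= L /\ disjI (Vint L (mm L).-1 k) (Vint L 0 k).
Proof.
move=> L0; exists L; split => //.
rewrite /Vint /mm ltnn.
case oL: (odd L) => /=.
- have -> : (3*L).+1 == 3*L = false by lia.
  rewrite eqxx.
  have -> : 0 == 3*L = false by lia.
  rewrite /disjI /=; by left.
- rewrite eqxx.
  have -> : 0 == 3*L = false by lia.
  rewrite /disjI /=; by left.
Qed.

Lemma Tdisj L tf u v : u < 3 -> v < 3 -> u != v ->
  disjI (Tint L tf u L) (Tint L tf v L).
Proof.
rewrite /Tint ltnn.
case: (odd L); case: (tf == 0);
case: u => [|[|[|u]]] //; case: v => [|[|[|v]]] // _ _ _; rewrite /disjI /=; lia.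
Qed.


Definition nc L := (mm L).-1.
Definition Vb L j : box L.+1 := nbox (fun k : 'I_L.+1 => Vint L j k).
Definition Tb L tf u : box L.+1 := nbox (fun k : 'I_L.+1 => Tint L tf u k).
Definition Fam L n : boxfam L.+1 := fun B =>
  if n < nc L then exists j, j < mm L /\ B = Vb L j
  else exists u, u < 3 /\ B = Tb L (n - nc L) u.
Definition pt L s t0 t1 X : point L.+1 := fun k => INR (ptv L s t0 t1 X k).

Arguments pt : clear implicits.
Arguments Vb : clear implicits.
Arguments Tb : clear implicits.
Arguments Fam : clear implicits.

Lemma disjI_nbox d (f1 f2 : 'I_d -> nat * nat) (x : point d) k :
  disjI (f1 k) (f2 k) -> in_box x (nbox f1) -> in_box x (nbox f2) -> False.
Proof.
case=> h h1 h2; [exact: (nbox_disj h h1 h2) | exact: (nbox_disj h h2 h1)].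
Qed.

Lemma mm_pos L : 0 < mm L.
Proof. rewrite /mm; by case: ifP. Qed.

Lemma nc_val L : nc L = if odd L then (3*L).+1 else 3*L.
Proof. rewrite /nc /mm; by case: ifP. Qed.

Lemma odd_mm L : odd (mm L).
Proof.
rewrite /mm; case: ifP => oL /=; rewrite ?negbK oddM /= ?oL //.
Qed.

Lemma Vb_in L s t0 t1 j : s < mm L -> j < mm L -> j != s ->
  in_box (pt L s t0 t1 (col L s j)) (Vb L j).
Proof.
move=> hs hj hjs; rewrite /pt /Vb; apply: in_nbox => k.
apply: coreA => //; exact: (ltn_ord k).
Qed.


Lemma Tb_disj L tf (x : point L.+1) u v : (u < 3)%N -> (v < 3)%N -> u != v ->
  in_box x (Tb L tf u) -> in_box x (Tb L tf v) -> False.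
Proof.
move=> hu hv huv; apply: (@disjI_nbox _ _ _ x ord_max) => /=.
exact: Tdisj.
Qed.

Lemma transv L (t : 'I_(3 * L.+1 - 1)%N -> box L.+1) :
  (forall i, Fam L (val i) (t i)) -> pierceable2 (tuple_family t).
Proof.
move=> H.
have bnd : (3 * L.+1 - 1 = (3 * L).+2)%N by lia.
have ncv := nc_val L.
have [g Hg] : exists g : nat -> nat, forall n, forall i : 'I_(3 * L.+1 - 1)%N,
    val i = n -> (n < nc L)%N -> (g n < mm L)%N /\ t i = Vb L (g n).
  apply: (functional_choice (fun n j => forall i : 'I_(3 * L.+1 - 1)%N,
    val i = n -> (n < nc L)%N -> (j < mm L)%N /\ t i = Vb L j)) => n.
  case h: (n < 3 * L.+1 - 1)%N.
  - case hn: (n < nc L)%N; last by exists 0%N.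
    have := H (Ordinal h); rewrite /Fam /= hn => -[j [hj e]].
    exists j => i ei _; have -> : i = Ordinal h by apply: val_inj.
    by [].
  - exists 0%N => i ei; exfalso; move: (ltn_ord i); rewrite ei h //.
have [s [hs hgs]] := pigeon (nc L) g.
have hsm : (s < mm L)%N by move: hs (mm_pos L); rewrite /nc; lia.
have [u0 [hu0 Hu0]] : exists u0, (u0 < 3)%N /\
    forall i : 'I_(3 * L.+1 - 1)%N, val i = nc L -> t i = Tb L 0 u0.
  have h : (nc L < 3 * L.+1 - 1)%N by rewrite ncv; case: ifP => _; lia.
  have := H (Ordinal h); rewrite /Fam /= ltnn subnn => -[u [hu e]].
  exists u; split => // i ei; have -> : i = Ordinal h by apply: val_inj.
  by [].
have [u1 [hu1 Hu1]] : exists u1, (u1 < 3)%N /\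
    forall i : 'I_(3 * L.+1 - 1)%N, val i = (nc L).+1 -> t i = Tb L 1 u1.
  case h: ((nc L).+1 < 3 * L.+1 - 1)%N.
  - have := H (Ordinal h); rewrite /Fam /=.
    have -> : ((nc L).+1 < nc L)%N = false by lia.
    have -> : ((nc L).+1 - nc L = 1)%N by lia.
    move=> -[u [hu e]].
    exists u; split => // i ei; have -> : i = Ordinal h by apply: val_inj.
    by [].
  - exists 0%N; split => // i ei; exfalso; move: (ltn_ord i); rewrite ei h //.
exists (pt L s u0 u1 false), (pt L s u0 u1 true).
move=> B [i ->].
case hi: (val i < nc L)%N.
- have [hg et] := Hg (val i) i erefl hi.
  rewrite et.
  have key := @Vb_in L s u0 u1 (g (val i)) hsm hg (hgs _ hi).
  move: key; case: (col L s (g (val i))) => key; [right|left]; exact: key.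
- have hiv : val i = nc L \/ (val i = (nc L).+1 /\ ~~ odd L).
    move: (ltn_ord i) hi; rewrite ncv; case: (odd L) => /=; lia.
  case: hiv => [ei|[ei oL]].
  + rewrite (Hu0 i ei).
    case oL: (odd L).
    * have key : in_box (pt L s u0 u1 (~~ col L s (3*L).+1)) (Tb L 0 u0).
        rewrite /pt /Tb; apply: in_nbox => k; apply: tri_ev => //; exact: (ltn_ord k).
      move: key; case: (~~ col L s (3*L).+1) => key; [right|left]; exact: key.
    * have key : in_box (pt L s u0 u1 (if u0 == 2 then XE L s else ~~ XE L s)) (Tb L 0 u0).
        rewrite /pt /Tb; apply: in_nbox => k; apply: tri_odd0 => //; [by rewrite oL | exact: (ltn_ord k)].
      move: key; case: (if u0 == 2 then XE L s else ~~ XE L s) => key; [right|left]; exact: key.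
  + rewrite (Hu1 i ei).
    have key : in_box (pt L s u0 u1 (if u1 == 0 then ~~ XE L s else XE L s)) (Tb L 1 u1).
      rewrite /pt /Tb; apply: in_nbox => k; apply: tri_odd1 => //; exact: (ltn_ord k).
    move: key; case: (if u1 == 0 then ~~ XE L s else XE L s) => key; [right|left]; exact: key.
Qed.

Lemma nonpierce L n : (n < 3 * L.+1 - 1)%N -> ~ pierceable2 (Fam L n).
Proof.
move=> hn [p [q Hpq]].
have ncv := nc_val L.
case hi: (n < nc L)%N.
- have L0 : (0 < L)%N.
    rewrite lt0n; apply/eqP => e; move: hi; rewrite ncv e /=; lia.
  have HV : forall j, (j < mm L)%N -> Fam L n (Vb L j).
    by move=> j hj; rewrite /Fam hi; exists j.
  apply: (@odd_cycle (mm L) (fun j => in_box p (Vb L j)) (fun j => in_box q (Vb L j)) (odd_mm L)).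
  + move=> j hj; exact: Hpq _ (HV j hj).
  + move=> j hj [h1 h2]; have [k [hk hd]] := Vdisj L0 hj.
    exact: (@disjI_nbox _ _ _ p (Ordinal (hk : (k < L.+1)%N)) hd h1 h2).
  + move=> j hj [h1 h2]; have [k [hk hd]] := Vdisj L0 hj.
    exact: (@disjI_nbox _ _ _ q (Ordinal (hk : (k < L.+1)%N)) hd h1 h2).
  + move=> [h1 h2]; have [k [hk hd]] := Vwrap L0.
    exact: (@disjI_nbox _ _ _ p (Ordinal (hk : (k < L.+1)%N)) hd h1 h2).
  + move=> [h1 h2]; have [k [hk hd]] := Vwrap L0.
    exact: (@disjI_nbox _ _ _ q (Ordinal (hk : (k < L.+1)%N)) hd h1 h2).
- set tf := (n - nc L)%N.
  have HT : forall u, (u < 3)%N -> in_box p (Tb L tf u) \/ in_box q (Tb L tf u).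
    move=> u hu; apply: Hpq; rewrite /Fam hi; by exists u.
  have D := @Tb_disj L tf.
  case: (HT 0%N erefl) => h0; case: (HT 1%N erefl) => h1; case: (HT 2%N erefl) => h2.
  + exact: (D p 0%N 1%N erefl erefl erefl h0 h1).
  + exact: (D p 0%N 1%N erefl erefl erefl h0 h1).
  + exact: (D p 0%N 2%N erefl erefl erefl h0 h2).
  + exact: (D q 1%N 2%N erefl erefl erefl h1 h2).
  + exact: (D p 1%N 2%N erefl erefl erefl h1 h2).
  + exact: (D q 0%N 2%N erefl erefl erefl h0 h2).
  + exact: (D q 0%N 1%N erefl erefl erefl h0 h1).
  + exact: (D q 0%N 1%N erefl erefl erefl h0 h1).
Qed.

Local Close Scope nat_scope.

Theorem theorem9 : forall d : nat,
  exists F : 'I_(3 * d - 1)%N -> boxfam d,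
    (forall i, nonempty_family (F i)) /\
    (forall t : 'I_(3 * d - 1)%N -> box d,
        (forall i, F i (t i)) -> pierceable2 (tuple_family t)) /\
    (forall i, ~ pierceable2 (F i)).
Proof.
case=> [|L].
- exists (fun _ _ => False); split; [|split].
  + move=> [m hm]; exfalso; lia.
  + move=> t _; exists (fun _ => R0), (fun _ => R0) => B [[m hm] _]; exfalso; lia.
  + move=> [m hm]; exfalso; lia.
- exists (fun i => Fam L (val i)); split; [|split].
  + move=> i; rewrite /nonempty_family; case h: (val i < nc L)%N.
    * exists (Vb L 0%N); rewrite /Fam h; exists 0%N; split => //; exact: mm_pos.
    * exists (Tb L (val i - nc L)%N 0%N); rewrite /Fam h; by exists 0%N.
  + exact: transv.
  + move=> i; apply: nonpierce; exact: (ltn_ord i).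
Qed.
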